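(* Consider the series $H_{a_1,\dots,a_r}(z)$ for all $r\ge1$ and all tuples $(a_1,\dots,a_r)$ of positive integers none of which is divisible by $3$. These series (for pairwise distinct tuples), together with the constant series $1$, are linearly independent over $(\mathbb Z/3\mathbb Z)[z]$; consequently they are also linearly independent over $(\mathbb Z/3^\gamma\mathbb Z)[z]$ for every positive integer $\gamma$, and over $\mathbb Z[z]$. That is, if $p_0(z)+\sum_{i=1}^N p_i(z)H_{a^{(i)}}(z)=0$ (over the respective coefficient ring) with pairwise distinct such tuples $a^{(i)}$, then all polynomials $p_i$ are zero.
   Context: For positive integers $a_1,\dots,a_r$, $H_{a_1,\dots,a_r}(z)=\sum_{n_1>n_2>\dots>n_r\ge0}z^{a_13^{n_1}+a_23^{n_2}+\dots+a_r3^{n_r}}$. *)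

(* Defs.v *)
From HB Require Import structures.
From mathcomp Require Import all_boot all_order all_algebra.
Set Implicit Arguments. Unset Strict Implicit. Unset Printing Implicit Defensive.
Import GRing.Theory.
Local Open Scope ring_scope.

(* Coefficient of z^m in H_a(z) = sum_{n_1 > ... > n_r >= 0} z^{a_1 3^{n_1}+...+a_r 3^{n_r}}:
   the number of strictly decreasing tuples (n_1,...,n_r) with
   a_1 3^{n_1} + ... + a_r 3^{n_r} = m.  Since all a_i >= 1, every such n_i
   satisfies n_i < 3^{n_i} <= m, so n_i ranges over 'I_(m.+1) without loss. *)
Definition Hcoef (a : seq nat) (m : nat) : nat :=
  #|[pred t : (size a).-tuple 'I_m.+1 |
      sorted (fun x y : 'I_m.+1 => (y < x)%N) t &&
      (\sum_(q <- zip a (map val t)) (q.1 * 3 ^ q.2)%N == m)]|.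

Definition Hser (R : nzRingType) (a : seq nat) (m : nat) : R := (Hcoef a m)%:R.

Definition mulps (R : nzRingType) (p : {poly R}) (f : nat -> R) (m : nat) : R :=
  \sum_(j < m.+1) p`_j * f (m - j)%N.

Definition admissible (a : seq nat) : bool :=
  (0 < size a)%N && all (fun x => (0 < x)%N && ~~ (3 %| x)%N) a.

Definition H_lin_indep (R : nzRingType) : Prop :=
  forall (N : nat) (A : 'I_N -> seq nat) (p0 : {poly R}) (p : 'I_N -> {poly R}),
    (forall i, admissible (A i)) ->
    injective A ->
    (forall m : nat, p0`_m + \sum_(i < N) mulps (p i) (Hser R (A i)) m = 0) ->
    p0 = 0 /\ (forall i, p i = 0).

(* Main.v *)
Require Import Defs.
From HB Require Import structures.
From mathcomp Require Import all_boot all_order all_algebra.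
From mathcomp Require Import zify.
Set Implicit Arguments. Unset Strict Implicit. Unset Printing Implicit Defensive.
Import GRing.Theory.

Fixpoint D (a : seq nat) (lo n m : nat) : nat :=
  match a with
  | [::] => (m == 0)
  | x :: a' => \sum_(lo <= e < n) (x * 3 ^ e <= m) * D a' lo e (m - x * 3 ^ e)
  end.

Lemma D_empty a lo n m : a != [::] -> n <= lo -> D a lo n m = 0.
Proof. by case: a => //= x a _ H; rewrite big_geq. Qed.

Lemma D_shift a lo n m : D a lo.+1 n.+1 (3 * m) = D a lo n m.
Proof.
elim: a lo n m => [|x a IH] lo n m /=; first by rewrite muln_eq0.
rewrite big_add1 /=. apply: eq_bigr => e _.
rewrite expnS mulnCA leq_pmul2l // -mulnBr IH //.
Qed.

Lemma D_ndiv a lo n m : ~~ (3 %| m) -> D a lo.+1 n m = 0.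
Proof.
elim: a lo n m => [|x a IH] lo n m H /=.
  by case: eqP H => // ->.
rewrite big_nat big1 // => e /andP [He _].
case: leqP => Hle; last by rewrite mul0n.
rewrite IH ?muln0 //.
apply: contra H => H3.
have -> : m = (m - x * 3 ^ e) + x * 3 ^ e by rewrite subnK.
rewrite dvdn_add //. apply: dvdn_mull.
by clear -He; case: e He => // e _; rewrite expnS dvdn_mulr.
Qed.

Lemma D_split a x lo n m :
  D (rcons a x) lo n m = D (rcons a x) lo.+1 n m +
     (lo < n) * (x * 3 ^ lo <= m) * D a lo.+1 n (m - x * 3 ^ lo).
Proof.
elim: a n m => [|y a IH] n m /=.
  case: (ltnP lo n) => Hn; last by rewrite !big_geq // ltnW.
  by rewrite big_ltn // addnC mul1n.
case: (ltnP lo n) => Hn; last by rewrite !big_geq // ?mul0n ?addn0 // ltnW.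
rewrite [LHS]big_ltn // D_empty //; last by case: (a).
rewrite muln0 add0n mul1n.
rewrite (@eq_big_nat _ _ _ _ _ _ (fun e => (y * 3 ^ e <= m) * D (rcons a x) lo.+1 e (m - y * 3 ^ e)
   + (x * 3 ^ lo <= m - y * 3 ^ e) * ((y * 3 ^ e <= m) * D a lo.+1 e (m - y * 3 ^ e - x * 3 ^ lo)))); last first.
  move=> e /andP [He _]. rewrite IH He mul1n mulnDr. congr (_ + _). lia.
rewrite big_split /=. congr (_ + _).
rewrite big_distrr /=.
apply: eq_big_nat => e /andP [He _].
set A := y * 3 ^ e. set B := x * 3 ^ lo.
rewrite -subnDA addnC subnDA.
case: (leqP A m) => HA; case: (leqP B m) => HB;
  case: (leqP B (m - A)) => HBA; case: (leqP A (m - B)) => HAB;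
  rewrite ?mul0n ?muln0 ?mul1n ?muln1 //; lia.
Qed.

Lemma D_bound1 a lo n m : all (fun x => 0 < x) a -> m < n ->
  D a lo n.+1 m = D a lo n m.
Proof.
case: a => [|x a] //= /andP [Hx _] Hmn.
case: (leqP lo n) => Hlo; last by rewrite !big_geq // ltnW.
rewrite big_nat_recr //= leqNgt.
have : m < x * 3 ^ n.
  apply: (leq_trans Hmn). apply: (leq_trans (ltnW (ltn_expl n (isT : 1 < 3)))).
  by rewrite leq_pmull.
by move=> ->; rewrite mul0n addn0.
Qed.

Lemma D_bound a lo n m : all (fun x => 0 < x) a -> m < n ->
  D a lo n m = D a lo m.+1 m.
Proof.
move=> Ha; elim: n => // n IH Hn.
case: (ltnP m n) => H.
  by rewrite D_bound1 // IH.
by have -> : n = m by lia.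
Qed.
Lemma card_tuple_cons (T : finType) k (P : pred (k.+1.-tuple T)) :
 #|P| = \sum_(x : T) #|[pred t : k.-tuple T | P [tuple of x :: t]]|.
Proof.
rewrite -sum1_card.
rewrite (reindex (fun p : T * k.-tuple T => [tuple of p.1 :: p.2])) /=; last first.
  apply: onW_bij.
  exists (fun t : k.+1.-tuple T => (thead t, [tuple of behead t])).
    by case=> x t /=; congr (_, _); apply: val_inj.
  by move=> t /=; rewrite [RHS]tuple_eta.
rewrite -(pair_big_dep xpredT (fun (x : T) (t : k.-tuple T) => P [tuple of x :: t]) (fun _ _ => 1%N)) /=.
by apply: eq_bigr => x _; rewrite sum1_card.
Qed.
Lemma Hcard a N n m : n <= N ->
 #|[pred t : (size a).-tuple 'I_N | sorted (fun x y : 'I_N => (y < x)%N) t &&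
     all (fun e : 'I_N => (e < n)%N) t &&
     ((\sum_(q <- zip a (map val t)) (q.1 * 3 ^ q.2)%N)%R == m)]| = D a 0 n m.
Proof.
elim: a n m => [|x a IH] n m HnN /=.
  case: eqP => Hm.
    rewrite eq_cardT; first by rewrite -cardT card_tuple expn0.
    by move=> t; rewrite [t]tuple0 inE /= big_nil Hm.
  apply: eq_card0 => t. rewrite [t]tuple0 inE /= big_nil.
  by apply/eqP => H; apply: Hm; rewrite -H.
rewrite card_tuple_cons.
rewrite (eq_bigr (fun e : 'I_N => (e < n) * ((x * 3 ^ e <= m) * D a 0 e (m - x * 3 ^ e)))); last first.
  move=> e _.
  have Htr : transitive (fun x y : 'I_N => (y < x)%N).
    by move=> u v w H1 H2; apply: ltn_trans H2 H1.
  case: (ltnP e n) => Hen; last first.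
    rewrite mul0n; apply: eq_card0 => t; rewrite inE /=.
    by rewrite [e < n]ltnNge Hen /= andbF.
  case: (leqP (x * 3 ^ e) m) => Hxm; last first.
    rewrite mul0n muln0; apply: eq_card0 => t; rewrite inE /= big_cons /=.
    apply/negP => /andP [_ /eqP Hs].
    by move: Hxm; rewrite -Hs ltnNge leq_addr.
  rewrite !mul1n -(IH e (m - x * 3 ^ e) (ltnW (leq_trans (ltn_ord e) (leqnn N)))).
  apply: eq_card => t; rewrite !inE /= big_cons /= (path_sortedE Htr) Hen /=.
  have HS : forall s : nat, (x * 3 ^ e + s == m) = (s == m - x * 3 ^ e).
    move=> s; apply/eqP/eqP => H; [by rewrite -H addKn | by rewrite H subnKC].
  rewrite HS.
  case Hall: (all (fun y : 'I_N => y < e) t); rewrite /= ?andbF //.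
  have -> : all (fun e0 : 'I_N => e0 < n) t.
    by apply/allP => u Hu; apply: ltn_trans Hen; move/allP: Hall; apply.
  by case: (sorted _ _); case: (_ == _).
rewrite big_mkord (big_ord_widen N (fun e => (x * 3 ^ e <= m) * D a 0 e (m - x * 3 ^ e)) HnN) big_mkcond /=.
rewrite [RHS]big_mkcond /=.
by apply: eq_bigr => i _; case: (i < n); rewrite ?mul1n ?mul0n.
Qed.

Lemma Hcoef_D a m : Hcoef a m = D a 0 m.+1 m.
Proof.
rewrite /Hcoef -(Hcard a m (leqnn _)).
apply: eq_card => t; rewrite !inE.
congr (_ && _).
have -> : all (fun e : 'I_m.+1 => (e < m.+1)%N) t by apply/allP => u _; apply: ltn_ord.
by rewrite andbT.
Qed.

Definition h a m := D a 0 m.+1 m.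
Definition good (a : seq nat) := all (fun x => (0 < x) && ~~ (3 %| x)) a.

Lemma good_pos a : good a -> all (fun x => 0 < x) a.
Proof. by move/allP=> H; apply/allP => x /H /andP []. Qed.

Lemma good_rcons a x : good (rcons a x) = good a && (0 < x) && ~~ (3 %| x).
Proof. by rewrite /good all_rcons andbC andbA. Qed.

Lemma h_nil m : h [::] m = (m == 0).
Proof. by []. Qed.

Lemma hR0 a m : good a -> h a (3 * m) = h a m.
Proof.
case: (lastP a) => [|a' x]; first by rewrite !h_nil muln_eq0.
rewrite good_rcons => /andP [/andP [Ha Hx] H3].
case: m => [|m] //.
rewrite /h D_split /= expn0 muln1 mul1n.
have -> : (x <= 3 * m.+1) * D a' 1 (3 * m.+1).+1 (3 * m.+1 - x) = 0.
  case: leqP => Hle; last by rewrite mul0n.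
  rewrite D_ndiv ?muln0 //. apply: contra H3 => H.
  have -> : x = 3 * m.+1 - (3 * m.+1 - x) by rewrite subKn.
  by rewrite dvdn_sub // dvdn_mulr.
rewrite addn0 -[(3 * m.+1).+1]/((3 * m.+1).+1) D_shift D_bound //.
  by apply: good_pos; rewrite good_rcons Ha Hx H3.
lia.
Qed.

Lemma hRs_nil u s : 0 < s -> h [::] (3 * u + s) = 0.
Proof. by move=> Hs; rewrite h_nil; case: s Hs => // s _; rewrite addnS. Qed.

Lemma hRs a x u s : 0 < s < 3 -> good (rcons a x) ->
  h (rcons a x) (3 * u + s) = ((x %% 3 == s) && (x %/ 3 <= u)) * h a (u - x %/ 3).
Proof.
move=> /andP [Hs0 Hs3].
rewrite good_rcons => /andP [/andP [Ha Hx] H3].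
have Hnd : ~~ (3 %| 3 * u + s).
  rewrite dvdn_addr ?dvdn_mulr //. by case: s Hs0 Hs3 => [|[|[|]]].
rewrite /h D_split D_ndiv // add0n /= expn0 muln1.
case: leqP => Hle; last first.
  rewrite mul0n. case: eqP => //= Hm. rewrite leqNgt.
  suff -> : u < x %/ 3 by [].
  lia.
rewrite mul1n.
case: eqP => Hm /=; last first.
  rewrite D_ndiv ?muln0 //. apply/negP => H. apply: Hm. lia.
have Hxu : x %/ 3 <= u by lia.
rewrite Hxu /=.
have -> : 3 * u + s - x = 3 * (u - x %/ 3) by lia.
rewrite D_shift D_bound //; [exact: good_pos | lia].
Qed.

Definition G a j m := if j <= m then h a (m - j) else 0.

Definition ip k j := j %/ 3 + (k < j %% 3).
Definition sp k j := (k + 3 - j %% 3) %% 3.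

Lemma ip_le k j m : k < 3 -> (j <= 3 * m + k) = (ip k j <= m).
Proof. move=> Hk; rewrite /ip; case: ltnP => H; apply/idP/idP; lia. Qed.

Lemma ip_sub k j m : k < 3 -> ip k j <= m -> 3 * m + k - j = 3 * (m - ip k j) + sp k j.
Proof. move=> Hk; rewrite /ip /sp; case: ltnP => H; lia. Qed.

Lemma sp_lt k j : sp k j < 3.
Proof. by rewrite /sp ltn_mod. Qed.

Lemma G_step a j m k : k < 3 -> good a ->
  G a j (3 * m + k) =
  if sp k j == 0 then G a (ip k j) m else
  match a with [::] => 0
  | y :: a0 => (last y a0 %% 3 == sp k j) * G (belast y a0) (ip k j + last y a0 %/ 3) m end.
Proof.
move=> Hk Ha.
rewrite /G ip_le //.
case: ifP => Hi; last first.
  case: eqP => // _. case: a Ha => // y a0 _.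
  have -> : ip k j + last y a0 %/ 3 <= m = false by lia.
  by rewrite muln0.
rewrite ip_sub //.
case: eqP => Hs.
  by rewrite Hs addn0 hR0.
have Hs' : 0 < sp k j < 3 by rewrite sp_lt andbT lt0n; apply/eqP.
case: a Ha => [|y a0] Ha; first by rewrite hRs_nil //; case/andP: Hs'.
move: Ha; rewrite (lastI y a0) => Ha.
rewrite hRs //.
case: eqP => Hm //=.
case: leqP => H1.
  have -> : ip k j + last y a0 %/ 3 <= m by lia.
  by rewrite subnDA.
have -> : ip k j + last y a0 %/ 3 <= m = false by lia.
by [].
Qed.
Section Atoms.
Variable R : nzRingType.
Local Open Scope ring_scope.

Definition evalL (L : seq (seq nat * nat * R)) m : R :=
  \sum_(t <- L) t.2 * (G t.1.1 t.1.2 m)%:R.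
Definition KL (L : seq (seq nat * nat * R)) (k : seq nat * nat) : R :=
  \sum_(t <- L | t.1 == k) t.2.

Definition phi (k : nat) (t : seq nat * nat * R) : seq nat * nat * R :=
  let: (a, j, c) := t in
  if sp k j == 0%N then (a, ip k j, c) else
  match a with [::] => ([::], 0%N, 0)
  | y :: a0 => if (last y a0 %% 3)%N == sp k j then (belast y a0, (ip k j + last y a0 %/ 3)%N, c)
               else ([::], 0%N, 0) end.

Definition Lam k L := map (phi k) L.

Definition okL r (L : seq (seq nat * nat * R)) :=
  all (fun t => good t.1.1 && (size t.1.1 <= r)%N) L.

Lemma phi_eval k t m : (k < 3)%N -> good t.1.1 ->
  (phi k t).2 * (G (phi k t).1.1 (phi k t).1.2 m)%:R = t.2 * (G t.1.1 t.1.2 (3 * m + k))%:R.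
Proof.
case: t => [[a j] c] /= Hk Ha.
rewrite G_step //.
case: eqP => //= Hs.
case: a Ha => [|y a0] Ha /=; first by rewrite mul0r mulr0.
case: eqP => Hm /=; first by rewrite mul1n.
by rewrite mul0r mul0n mulr0.
Qed.

Lemma good_belast y a0 : good (y :: a0) -> good (belast y a0).
Proof. by rewrite (lastI y a0) good_rcons => /andP [/andP []]. Qed.

Lemma phi_ok k t : good t.1.1 -> good (phi k t).1.1 && (size (phi k t).1.1 <= size t.1.1)%N.
Proof.
case: t => [[a j] c] /= Ha.
case: eqP => _ /=; first by rewrite Ha leqnn.
case: a Ha => [|y a0] Ha //=.
case: eqP => _ /=; last by []. by rewrite good_belast // size_belast leqnSn.
Qed.

Lemma okL_Lam r k L : okL r L -> okL r (Lam k L).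
Proof.
rewrite /okL /Lam all_map => /allP H; apply/allP => t /H /andP [Hg Hs] /=.
case/andP: (phi_ok k Hg) => -> /= H2. exact: leq_trans H2 Hs.
Qed.

Lemma eval_Lam r k L m : (k < 3)%N -> okL r L -> evalL (Lam k L) m = evalL L (3 * m + k).
Proof.
move=> Hk HL. rewrite /evalL /Lam big_map.
apply: eq_big_seq => t Ht. apply: phi_eval => //.
by move/allP: HL => /(_ t Ht) /andP [].
Qed.

Lemma zero_Lam r k L : (k < 3)%N -> okL r L -> (forall m, evalL L m = 0) ->
  forall m, evalL (Lam k L) m = 0.
Proof. by move=> Hk HL H m; rewrite (eval_Lam m Hk HL) H. Qed.

Lemma KL_map (f : seq nat * nat * R -> seq nat * nat * R) L key : KL (map f L) key = \sum_(t <- L) (if (f t).1 == key then (f t).2 else 0).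
Proof. by rewrite /KL big_map big_mkcond. Qed.

Lemma KL_E L key : KL L key = \sum_(t <- L) (if t.1 == key then t.2 else 0).
Proof. by rewrite /KL big_mkcond. Qed.

Lemma sp0 k j : (k < 3)%N -> (sp k j == 0%N) = (j %% 3 == k)%N.
Proof. rewrite /sp => Hk; apply/eqP/eqP; lia. Qed.

Lemma topK r k L b i : (k < 3)%N -> okL r L -> size b = r ->
  KL (Lam k L) (b, i) = KL L (b, (3 * i + k)%N).
Proof.
move=> Hk HL Hb. rewrite KL_map KL_E.
apply: eq_big_seq => [[[a j] c]] Ht.
move/allP: HL => /(_ _ Ht) /andP [/= Ha Hs].
rewrite /phi. case Hsp: (sp k j == 0%N).
  rewrite /= !xpair_eqE. move: Hsp; rewrite sp0 // /ip => /eqP Hj.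
  have -> : (k < j %% 3)%N = false by lia.
  have -> : (j %/ 3 + false == i)%N = (j == 3 * i + k)%N by apply/eqP/eqP; lia.
  by [].
have Hj : (j == 3 * i + k)%N = false.
  apply/negP => /eqP Hj; move: Hsp; rewrite sp0 // Hj; lia.
rewrite xpair_eqE Hj andbF.
case: a Ha Hs Ht => [|y a0] Ha Hs Ht; first by case: ifP.
case: ((last y a0 %% 3)%N == sp k j) => /=; last by case: ifP.
rewrite xpair_eqE.
have -> : (belast y a0 == b) = false.
  apply/negP => /eqP Hb'. move: Hs. rewrite -Hb -Hb' size_belast /=. lia.
by [].
Qed.

Definition hiz s (L : seq (seq nat * nat * R)) :=
  all (fun t => (s <= size t.1.1)%N ==> (t.1.2 == 0%N)) L.
Definition bnd s n J (L : seq (seq nat * nat * R)) :=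
  all (fun t => (size t.1.1 == s) ==> (t.1.2 * 3 ^ n <= J))%N L.

Lemma phase_atom s n J t :
  ((s < size t.1.1)%N ==> (t.1.2 == 0%N)) -> ((size t.1.1 == s) ==> (t.1.2 * 3 ^ n <= J))%N ->
  ((s < size (phi 0 t).1.1)%N ==> ((phi 0 t).1.2 == 0%N)) &&
  ((size (phi 0 t).1.1 == s) ==> ((phi 0 t).1.2 * 3 ^ n.+1 <= J))%N.
Proof.
case: t => [[a j] c] /= H1 H2.
rewrite /phi. case Hsp: (sp 0 j == 0%N).
  move: Hsp; rewrite sp0 // /ip /= => /eqP Hj.
  have -> : (0 < j %% 3)%N = false by lia.
  rewrite addn0; apply/andP; split; apply/implyP => Hs.
    by move: H1; rewrite Hs /= => /eqP ->.
  have Hd : (3 %| j)%N by rewrite /dvdn; apply/eqP; lia.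
  by move: H2; rewrite Hs /= expnS mulnA divnK.
case: a H1 H2 => [|y a0] H1 H2 /=; first rewrite /=.
 by rewrite mul0n leq0n implybT.
case: ifP => _ /=; last by rewrite mul0n leq0n implybT.
rewrite size_belast.
have Hj : j <> 0%N by move=> Hj; move: Hsp; rewrite Hj.
apply/andP; split; apply/implyP => Hs.
  by move: H1; rewrite /= ltnS ltnW //= => /eqP.
by move: H1; rewrite /= (eqP Hs) ltnS leqnn /= => /eqP.
Qed.

Lemma phase_step s n J L : hiz s.+1 L -> bnd s n J L ->
  hiz s.+1 (Lam 0 L) && bnd s n.+1 J (Lam 0 L).
Proof.
rewrite /hiz /bnd /Lam !all_map => /allP H1 /allP H2.
rewrite -all_predI; apply/allP => t Ht /=.
exact: phase_atom (H1 t Ht) (H2 t Ht).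
Qed.

Lemma phase_iter s J L n : hiz s.+1 L -> bnd s 0 J L ->
  hiz s.+1 (iter n (Lam 0) L) && bnd s n J (iter n (Lam 0) L).
Proof.
move=> H1 H2; elim: n => [|n IH] /=; first by rewrite H1 H2.
by case/andP: IH => A B; apply: phase_step.
Qed.

Lemma phase_full s L : hiz s.+1 L -> exists n, hiz s (iter n (Lam 0) L).
Proof.
move=> H1.
set J := (\sum_(t <- L) t.1.2)%N.
have H2 : bnd s 0 J L.
  apply/allP => t Ht; apply/implyP => _.
  by rewrite expn0 muln1 /J (big_rem _ Ht) /= leq_addr.
exists J; case/andP: (phase_iter J H1 H2) => A B.
apply/allP => t Ht; apply/implyP => Hs.
move/allP: A => /(_ t Ht) /implyP A.
move/allP: B => /(_ t Ht) /implyP B.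
move: Hs; rewrite leq_eqVlt => /orP [/eqP Hs|Hs]; last exact: A.
have := B (introT eqP (esym Hs)).
case: (t.1.2) => // j Hj.
have := ltn_expl J (isT : (1 < 3)%N).
move: Hj; rewrite mulSn => Hj Hlt.
have : (3 ^ J <= J)%N by apply: leq_trans Hj; apply: leq_addr.
by rewrite leqNgt Hlt.
Qed.

Lemma okL_iter r k L n : okL r L -> okL r (iter n (Lam k) L).
Proof. by move=> H; elim: n => //= n IH; apply: okL_Lam. Qed.

Lemma zero_iter r k L n : (k < 3)%N -> okL r L -> (forall m, evalL L m = 0) ->
  forall m, evalL (iter n (Lam k) L) m = 0.
Proof.
move=> Hk HL H; elim: n => //= n IH.
exact: (zero_Lam Hk (@okL_iter r k L n HL) IH).
Qed.

Lemma K_iter r L n b : okL r L -> size b = r -> KL (iter n (Lam 0) L) (b, 0%N) = KL L (b, 0%N).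
Proof.
move=> HL Hb; elim: n => //= n IH.
by rewrite (topK _ _ (@okL_iter r 0 L n HL) Hb).
Qed.

Lemma sp_0 k : (0 < k < 3)%N -> sp k 0 = k.
Proof. rewrite /sp => Hk; lia. Qed.

Lemma ip_0 k : ip k 0 = 0%N.
Proof. by rewrite /ip. Qed.

Lemma okL_drop r k L : (0 < k < 3)%N -> okL r.+1 L -> hiz r L -> okL r (Lam k L).
Proof.
move=> Hk /allP HL /allP Hz; rewrite /okL /Lam all_map; apply/allP => t Ht /=.
case/andP: (HL t Ht) => Hg Hs.
case/andP: (phi_ok k Hg) => -> /= Hs'.
case: (leqP (size t.1.1) r) => Hr; first exact: leq_trans Hs' Hr.
have Hj : t.1.2 = 0%N by apply/eqP; move/implyP: (Hz t Ht); apply; apply: ltnW.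
case: t Ht Hg Hs Hs' Hr Hj => [[a j] c] /= Ht Hg Hs Hs' Hr ->.
rewrite /phi sp_0 //.
have -> : (k == 0%N) = false by lia.
case: a Ht Hg Hs Hs' Hr => [|y a0] //= Ht Hg Hs Hs' Hr.
case: ifP => _ //=. rewrite size_belast. by rewrite ltnS in Hs.
Qed.

Lemma step0_atom r k b' x t : (0 < k < 3)%N -> (x %% 3 = k)%N -> size b' = r ->
  good t.1.1 -> (size t.1.1 <= r.+1)%N -> ((r <= size t.1.1)%N ==> (t.1.2 == 0%N)) ->
  (if (phi k t).1 == (b', (x %/ 3)%N) then (phi k t).2 else 0) =
  (if t.1 == (rcons b' x, 0%N) then t.2 else 0).
Proof.
move=> Hk Hx Hb.
case: t => [[a j] c] /= Hg Hs Hz.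
case: (leqP r (size a)) => Hr; last first.
  have -> : (a, j) == (rcons b' x, 0%N) = false.
    rewrite xpair_eqE. apply/negP => /andP [/eqP Ha _].
    by move: Hr; rewrite Ha size_rcons Hb ltnNge leqnSn.
  case: ifP => // /eqP Hph.
  case/andP: (phi_ok k (t := (a, j, c)) Hg) => _ /=.
  by rewrite Hph /= Hb leqNgt Hr.
move/implyP: Hz => /(_ Hr) /eqP Hj. subst j.
rewrite /phi sp_0 //.
have -> : (k == 0%N) = false by lia.
case: a Hg Hs Hr => [|y a0] Hg Hs Hr.
  rewrite xpair_eqE /=.
  by rewrite xpair_eqE; case: (b') => [|? ?] /=; [case: (_ == _) | ].

rewrite (lastI y a0) xpair_eqE eqseq_rcons andbT.
rewrite ip_0 add0n.
case Hl: ((last y a0 %% 3)%N == k) => /=.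
  rewrite xpair_eqE.
  have -> : (last y a0 %/ 3 == x %/ 3)%N = (last y a0 == x).
    apply/eqP/eqP => H; last by rewrite H.
    move/eqP: Hl; rewrite -Hx => /eqP Hl. lia.
  by [].
have -> : (last y a0 == x) = false.
  apply/negP => /eqP H; move: Hl; rewrite H Hx eqxx //.
rewrite andbF. by case: ifP.
Qed.

Definition IHr r := forall L, okL r L -> (forall m, evalL L m = 0) -> forall key, KL L key = 0.

Lemma step0 r L b : IHr r -> okL r.+1 L -> (forall m, evalL L m = 0) ->
  size b = r.+1 -> good b -> KL L (b, 0%N) = 0.
Proof.
move=> IH HL HE Hb Hg.
have Hz2 : hiz r.+2 L.
  apply/allP => t Ht; move/allP: HL => /(_ t Ht) /andP [_ Hs].
  by rewrite leqNgt ltnS Hs.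
have [n1 H1] := phase_full Hz2.
have [n2 H2] := phase_full H1.
set L2 := iter n2 (Lam 0) (iter n1 (Lam 0) L).
have HL2 : okL r.+1 L2 by apply: okL_iter; apply: okL_iter.
have HE2 : forall m, evalL L2 m = 0.
  apply: (@zero_iter r.+1 0 _ n2 isT (@okL_iter r.+1 0 L n1 HL)).
  exact: (@zero_iter r.+1 0 L n1 isT HL HE).
have -> : KL L (b, 0%N) = KL L2 (b, 0%N).
  by rewrite /L2 (K_iter n2 (@okL_iter r.+1 0 L n1 HL) Hb) (K_iter n1 HL Hb).
case/lastP: b Hb Hg => [|b' x] //.
rewrite size_rcons => /eqP; rewrite eqSS => /eqP Hb.
rewrite good_rcons => /andP [/andP [Hg Hx] H3].
set k := (x %% 3)%N.
have Hk : (0 < k < 3)%N by rewrite /k ltn_mod andbT lt0n.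
have HL3 : okL r (Lam k L2) by apply: okL_drop.
have HE3 : forall m, evalL (Lam k L2) m = 0.
  apply: (zero_Lam _ HL2 HE2); by case/andP: Hk.
have := IH _ HL3 HE3 (b', (x %/ 3)%N).
rewrite KL_map => H0; rewrite -H0 KL_E; apply: eq_big_seq => t Ht.
move/allP: HL2 => /(_ t Ht) /andP [Htg Hts].
symmetry; apply: step0_atom => //.
  by rewrite Hb.
by rewrite Hb; move/allP: H2 => /(_ t Ht).
Qed.

Lemma stepj r L b j : IHr r -> okL r.+1 L -> (forall m, evalL L m = 0) ->
  size b = r.+1 -> good b -> KL L (b, j) = 0.
Proof.
move=> IH; elim/ltn_ind: j L => j IHj L HL HE Hb Hg.
case: j IHj => [|j] IHj; first exact: (step0 IH HL HE Hb Hg).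
have Hk : ((j.+1 %% 3) < 3)%N by rewrite ltn_mod.
rewrite (divn_eq j.+1 3) mulnC -(topK (j.+1 %/ 3) Hk HL Hb).
apply: IHj => //.
- lia.
- exact: okL_Lam.
- exact: (zero_Lam Hk HL HE).
Qed.

Lemma eval_K L : (forall key, KL L key = 0) -> forall m, evalL L m = 0.
Proof.
move=> HK m; rewrite /evalL.
transitivity (\sum_(k <- undup (map fst L)) KL L k * (G k.1 k.2 m)%:R); last first.
  by rewrite big1 // => k _; rewrite HK mul0r.
symmetry.
under eq_bigr do rewrite KL_E big_distrl /=.
rewrite exchange_big /=.
apply: eq_big_seq => t Ht.
rewrite (bigD1_seq t.1) ?undup_uniq ?mem_undup ?map_f //= eqxx.
rewrite big1 ?addr0 // => k /negbTE Hk.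
by rewrite eq_sym Hk mul0r.
Qed.

Lemma eval_split (P : pred (seq nat * nat * R)) L m :
  evalL L m = evalL (filter P L) m + evalL (filter (predC P) L) m.
Proof. by rewrite /evalL !big_filter (bigID P). Qed.

Lemma KL_split (P : pred (seq nat * nat * R)) L key :
  KL L key = KL (filter P L) key + KL (filter (predC P) L) key.
Proof.
rewrite /KL !big_filter_cond (bigID P) /=.
by congr (_ + _); apply: eq_bigl => t; rewrite andbC.
Qed.

Lemma KL_none L key : (forall t, t \in L -> t.1 != key) -> KL L key = 0.
Proof. by move=> H; rewrite /KL big1_seq // => t /andP [/eqP Ht /H]; rewrite Ht eqxx. Qed.

Lemma main r : IHr r.
Proof.
elim: r => [|r IH] L HL HE [a j].
  have Ha : forall t, t \in L -> t.1.1 = [::].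
    by move=> t Ht; move/allP: HL => /(_ t Ht) /andP [_]; rewrite leqn0 => /nilP.
  case: a => [|y a]; last first.
    by apply: KL_none => t /Ha; case: t => [[b i] c] /= ->.
  rewrite -(HE j) KL_E /evalL; apply: eq_big_seq => t Ht.
  case: t Ht => [[b i] c] Ht /=; have /= Hb := Ha _ Ht; subst b.
  rewrite /G h_nil xpair_eqE eqxx /=.
  case: (leqP i j) => Hij.
    case: eqP => Hi; first by subst; rewrite subnn mulr1.
    have -> : (j - i == 0)%N = false by lia.
    by rewrite mulr0.
  have -> : (i == j) = false by lia.
  by rewrite mulr0.
set P := (fun t : seq nat * nat * R => (size t.1.1 <= r)%N).
have HLlo : okL r (filter P L).
  apply/allP => t; rewrite mem_filter => /andP [Hp Ht].
  by move/allP: HL => /(_ t Ht) /andP [-> _].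
have Hhi_sz : forall t, t \in filter (predC P) L -> size t.1.1 = r.+1.
  move=> t; rewrite mem_filter => /andP [Hp Ht].
  move/allP: HL => /(_ t Ht) /andP [_ Hs]. move: Hp; rewrite /= /P. lia.
have Hlo_sz : forall t, t \in filter P L -> (size t.1.1 <= r)%N.
  by move=> t; rewrite mem_filter => /andP [].
have Hhi : forall key, KL (filter (predC P) L) key = 0.
  move=> [b i].
  case: (boolP (size b == r.+1)) => Hb; last first.
    apply: KL_none => t /Hhi_sz Hs; apply/negP => /eqP Ht.
    by move: Hb; move: Hs; rewrite Ht /= => ->; rewrite eqxx.
  have Hlo0 : KL (filter P L) (b, i) = 0.
    apply: KL_none => t /Hlo_sz Hs; apply/negP => /eqP Ht.
    by move: Hs; rewrite Ht /= (eqP Hb) ltnn.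
  case Hg: (good b); last first.
    apply: KL_none => t Ht; apply/negP => /eqP Ht1.
    move: Ht; rewrite mem_filter => /andP [_ Ht].
    move/allP: HL => /(_ t Ht) /andP [].
    by rewrite Ht1 /= Hg.
  have := stepj i IH HL HE (eqP Hb) Hg.
  by rewrite (KL_split P) Hlo0 add0r.
have HElo : forall m, evalL (filter P L) m = 0.
  move=> m; have := HE m; rewrite (eval_split P) (eval_K Hhi) addr0 //.
by rewrite (KL_split P) Hhi (IH _ HLlo HElo) addr0.
Qed.

Definition atoms (a : seq nat) (q : {poly R}) : seq (seq nat * nat * R) :=
  [seq (a, j, q`_j) | j <- iota 0 (size q)].

Lemma sum_ext (F : nat -> R) n M : (n <= M)%N -> (forall j, (n <= j)%N -> F j = 0) ->
  \sum_(j < n) F j = \sum_(j < M) F j.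
Proof.
move=> HnM HF; rewrite (big_ord_widen _ _ HnM).
rewrite big_mkcond /=; apply: eq_bigr => j _; case: ltnP => // Hj; by rewrite HF.
Qed.

Lemma eval_atoms a q m : evalL (atoms a q) m = mulps q (Hser R a) m.
Proof.
rewrite /evalL /atoms big_map /mulps /Hser.
rewrite -{1}(subn0 (size q)) -/(index_iota 0 (size q)) big_mkord /=.
set F := fun j => q`_j * (G a j m)%:R.
rewrite (@sum_ext F (size q) (maxn (size q) m.+1)) ?leq_maxl //; last first.
  by move=> j Hj; rewrite /F nth_default // mul0r.
rewrite [RHS](eq_bigr (fun j : 'I_m.+1 => F j)) => [| j _]; last first.
  by rewrite /F Hcoef_D /G -ltnS ltn_ord.
rewrite [RHS](@sum_ext F m.+1 (maxn (size q) m.+1)) ?leq_maxr //.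
move=> j Hj; rewrite /F /G.
by rewrite leqNgt Hj mulr0.
Qed.

Lemma mulps_nil q m : mulps q (Hser R [::]) m = q`_m.
Proof.
rewrite /mulps /Hser big_ord_recr /= subnn Hcoef_D /= mulr1.
rewrite big1 ?add0r // => j _.
rewrite Hcoef_D /=.
have -> : (m - j == 0)%N = false by have := ltn_ord j; lia.
by rewrite mulr0.
Qed.

Lemma KL_atoms a q b j : KL (atoms a q) (b, j) = if a == b then q`_j else 0.
Proof.
rewrite /KL /atoms big_map /=.
case: eqP => Hab; last first.
  by rewrite big1 // => i; rewrite xpair_eqE => /andP [/eqP].
subst b.
under eq_bigl do rewrite xpair_eqE eqxx /=.
case: (ltnP j (size q)) => Hj.
  rewrite -big_filter.
  have -> : [seq i <- iota 0 (size q) | i == j] = [:: j].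
    by rewrite filter_pred1_uniq ?iota_uniq // mem_iota.
  by rewrite big_seq1.
rewrite nth_default // big1_seq // => i /andP [/eqP -> ].
by rewrite mem_iota add0n ltnNge Hj.
Qed.

Lemma KL_cat L1 L2 key : KL (L1 ++ L2) key = KL L1 key + KL L2 key.
Proof. by rewrite /KL big_cat. Qed.

Lemma KL_flat n (f : 'I_n -> seq (seq nat * nat * R)) key :
  KL (flatten [seq f i | i <- index_enum 'I_n]) key = \sum_(i < n) KL (f i) key.
Proof. by rewrite /KL big_flatten big_map. Qed.

Lemma eval_cat L1 L2 m : evalL (L1 ++ L2) m = evalL L1 m + evalL L2 m.
Proof. by rewrite /evalL big_cat. Qed.

Lemma eval_flat n (f : 'I_n -> seq (seq nat * nat * R)) m :
  evalL (flatten [seq f i | i <- index_enum 'I_n]) m = \sum_(i < n) evalL (f i) m.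
Proof. by rewrite /evalL big_flatten big_map. Qed.

Lemma okL_atoms r a q : good a -> (size a <= r)%N -> okL r (atoms a q).
Proof. by move=> Hg Hs; rewrite /okL /atoms all_map; apply/allP => j _ /=; rewrite Hg Hs. Qed.

Theorem lin_indep : H_lin_indep R.
Proof.
move=> N A p0 p HA Hinj Hrel.
set L := atoms [::] p0 ++ flatten [seq atoms (A i) (p i) | i <- index_enum 'I_N].
set r := (\max_(i < N) size (A i))%N.
have HL : okL r L.
  rewrite /okL all_cat; apply/andP; split; first exact: okL_atoms.
  apply/allP => t /flatten_mapP [i _ Ht].
  have : okL r (atoms (A i) (p i)).
    apply: okL_atoms; last exact: leq_bigmax.
    by case/andP: (HA i).
  by move/allP => /(_ t Ht).
have HE : forall m, evalL L m = 0.
  by move=> m; rewrite eval_cat eval_flat eval_atoms mulps_nil -[RHS](Hrel m);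
     congr (_ + _); apply: eq_bigr => i _; rewrite eval_atoms.
have HK := main HL HE.
have HAn : forall i, A i != [::] by move=> i; case/andP: (HA i); case: (A i).
split.
  apply/polyP => j; rewrite coef0.
  have := HK ([::], j); rewrite KL_cat KL_flat KL_atoms eqxx big1 ?addr0 // => i _.
  by rewrite KL_atoms (negbTE (HAn i)).
move=> i; apply/polyP => j; rewrite coef0.
have := HK (A i, j); rewrite KL_cat KL_flat KL_atoms eq_sym (negbTE (HAn i)) /= add0r.
rewrite (bigD1 i) //= KL_atoms eqxx big1 ?addr0 // => k Hk.
rewrite KL_atoms; case: eqP => // /Hinj Hki.
by rewrite Hki eqxx in Hk.
Qed.

End Atoms.

Theorem corollary2p3 :
  H_lin_indep 'Z_3 /\
  (forall gamma : nat, (0 < gamma)%N -> H_lin_indep 'Z_(3 ^ gamma)) /\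
  H_lin_indep int.
Proof.
split; first exact: lin_indep.
split; last exact: lin_indep.
move=> gamma _; exact: lin_indep.
Qed.
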